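(* Let $(\mathcal{E},\mathcal{M})$ be an orthogonal factorization system on a category $\mathcal{D}$ with pullbacks, and let $\mathcal{A}$ be a category with a terminal object $1$. Let $\mathcal{E}'$ be the class of natural transformations $e$ between functors $\mathcal{A}\to\mathcal{D}$ such that $e_1\in\mathcal{E}$, and let $\mathcal{M}'$ be the class of cartesian natural transformations $m$ between functors $\mathcal{A}\to\mathcal{D}$ such that $m_1\in\mathcal{M}$. Then $(\mathcal{E}',\mathcal{M}')$ is an orthogonal factorization system on the functor category $[\mathcal{A},\mathcal{D}]$. Moreover, for every functor $G:\mathcal{A}\to\mathcal{D}$ there is an equivalence of categories $\mathcal{M}'/G \simeq \mathcal{M}/G1$.
   Context: An orthogonal factorization system $(\mathcal{E},\mathcal{M})$ on a category: both classes contain all isomorphisms and are closed under composition; for every commuting square $g\circ e = m\circ f$ with $e\in\mathcal{E}$, $m\in\mathcal{M}$ there is a unique $d$ with $d\circ e=f$ and $m\circ d=g$; every morphism factors as $m\circ e$ with $e\in\mathcal{E}$, $m\in\mathcal{M}$. A natural transformation is cartesian if all its naturality squares are pullbacks. For a class $\mathcal{N}$ of morphisms and an object $X$, $\mathcal{N}/X$ denotes the category whose objects are pairs $(S,s)$ with $s:S\to X$ in $\mathcal{N}$, and whose morphisms $(S,s)\to(S',s')$ are morphisms $f:S\to S'$ with $s'\circ f = s$. *)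

(* Defs.v *)
From Stdlib Require Import ProofIrrelevance FunctionalExtensionality.

Record Category := {
  Ob : Type;
  Hom : Ob -> Ob -> Type;
  idm : forall a, Hom a a;
  comp : forall a b c, Hom b c -> Hom a b -> Hom a c;
  comp_assoc : forall a b c d (h : Hom c d) (g : Hom b c) (f : Hom a b),
      comp a c d h (comp a b c g f) = comp a b d (comp b c d h g) f;
  comp_id_l : forall a b (f : Hom a b), comp a b b (idm b) f = f;
  comp_id_r : forall a b (f : Hom a b), comp a a b f (idm a) = f }.

Arguments Hom {c0} a b : rename.
Arguments idm {c0} a : rename.
Arguments comp {c0 a b c} g f : rename.
Notation "g ∘ f" := (comp g f) (at level 40, left associativity).

Definition MorClass (C : Category) := forall a b : Ob C, @Hom C a b -> Prop.

Definition is_iso {C : Category} {a b : Ob C} (f : Hom a b) : Prop :=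
  exists g : Hom b a, g ∘ f = idm a /\ f ∘ g = idm b.

Record is_OFS (C : Category) (E M : MorClass C) : Prop := {
  ofs_E_iso : forall a b (f : @Hom C a b), is_iso f -> E a b f;
  ofs_M_iso : forall a b (f : @Hom C a b), is_iso f -> M a b f;
  ofs_E_comp : forall a b c (g : @Hom C b c) (f : Hom a b),
      E a b f -> E b c g -> E a c (g ∘ f);
  ofs_M_comp : forall a b c (g : @Hom C b c) (f : Hom a b),
      M a b f -> M b c g -> M a c (g ∘ f);
  ofs_lift : forall a b c d (e : @Hom C a b) (m : Hom c d) (f : Hom a c) (g : Hom b d),
      E a b e -> M c d m -> g ∘ e = m ∘ f ->
      exists! dg : Hom b c, dg ∘ e = f /\ m ∘ dg = g;
  ofs_fact : forall a b (f : @Hom C a b),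
      exists c (e : Hom a c) (m : Hom c b), E a c e /\ M c b m /\ m ∘ e = f }.

Definition is_pullback {C : Category} {P X Y Z : Ob C}
  (p1 : Hom P X) (p2 : Hom P Y) (f : Hom X Z) (g : Hom Y Z) : Prop :=
  f ∘ p1 = g ∘ p2 /\
  forall Q (q1 : Hom Q X) (q2 : Hom Q Y), f ∘ q1 = g ∘ q2 ->
    exists! u : Hom Q P, p1 ∘ u = q1 /\ p2 ∘ u = q2.

Definition has_pullbacks (C : Category) : Prop :=
  forall (X Y Z : Ob C) (f : Hom X Z) (g : Hom Y Z),
    exists P (p1 : Hom P X) (p2 : Hom P Y), is_pullback p1 p2 f g.

Definition is_terminal {C : Category} (t : Ob C) : Prop :=
  forall a : Ob C, exists f : Hom a t, forall g : Hom a t, g = f.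

Record Functor (C D : Category) := {
  fobj : Ob C -> Ob D;
  fmap : forall a b, @Hom C a b -> @Hom D (fobj a) (fobj b);
  fmap_id : forall a, fmap a a (idm a) = idm (fobj a);
  fmap_comp : forall a b c (g : @Hom C b c) (f : Hom a b),
      fmap a c (g ∘ f) = fmap b c g ∘ fmap a b f }.

Arguments fobj {C D} F a : rename.
Arguments fmap {C D} F {a b} f : rename.

Record NatTrans {C D : Category} (F G : Functor C D) := {
  ntc : forall a, @Hom D (fobj F a) (fobj G a);
  nt_natural : forall a b (f : @Hom C a b),
      fmap G f ∘ ntc a = ntc b ∘ fmap F f }.

Arguments ntc {C D F G} n a : rename.

Lemma nt_eq {C D : Category} {F G : Functor C D} (n m : NatTrans F G) :
  (forall a, ntc n a = ntc m a) -> n = m.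
Proof.
  destruct n as [n Hn], m as [m Hm]; simpl; intros H.
  assert (n = m) by (apply functional_extensionality_dep; exact H).
  subst m. f_equal. apply proof_irrelevance.
Qed.

Definition nt_id {C D : Category} (F : Functor C D) : NatTrans F F.
Proof.
  refine {| ntc := fun a => idm (fobj F a) |}.
  intros a b f. rewrite comp_id_l, comp_id_r. reflexivity.
Defined.

Definition nt_comp {C D : Category} {F G H : Functor C D}
  (m : NatTrans G H) (n : NatTrans F G) : NatTrans F H.
Proof.
  refine {| ntc := fun a => ntc m a ∘ ntc n a |}.
  intros a b f.
  rewrite comp_assoc, nt_natural, <- comp_assoc, nt_natural, comp_assoc.
  reflexivity.
Defined.

Definition FunCat (C D : Category) : Category.
Proof.
  refine {| Ob := Functor C D;
            Hom := fun F G => NatTrans F G;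
            idm := nt_id;
            comp := fun F G H m n => nt_comp m n |}.
  - intros; apply nt_eq; intros; simpl; apply comp_assoc.
  - intros; apply nt_eq; intros; simpl; apply comp_id_l.
  - intros; apply nt_eq; intros; simpl; apply comp_id_r.
Defined.

Definition SliceOb {C : Category} (N : MorClass C) (X : Ob C) : Type :=
  { S : Ob C & { s : Hom S X | N S X s } }.

Definition slice_map {C : Category} {N : MorClass C} {X : Ob C}
  (x : SliceOb N X) : Hom (projT1 x) X := proj1_sig (projT2 x).

Definition SliceHom {C : Category} {N : MorClass C} {X : Ob C}
  (x y : SliceOb N X) : Type :=
  { f : Hom (projT1 x) (projT1 y) | slice_map y ∘ f = slice_map x }.

Lemma slice_hom_eq {C : Category} {N : MorClass C} {X : Ob C}
  {x y : SliceOb N X} (f g : SliceHom x y) : proj1_sig f = proj1_sig g -> f = g.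
Proof.
  destruct f as [f Hf], g as [g Hg]; simpl; intros H; subst g.
  f_equal; apply proof_irrelevance.
Qed.

Definition slice_id {C : Category} {N : MorClass C} {X : Ob C}
  (x : SliceOb N X) : SliceHom x x.
Proof. exists (idm (projT1 x)). apply comp_id_r. Defined.

Definition slice_comp {C : Category} {N : MorClass C} {X : Ob C}
  {x y z : SliceOb N X} (g : SliceHom y z) (f : SliceHom x y) : SliceHom x z.
Proof.
  exists (proj1_sig g ∘ proj1_sig f).
  rewrite comp_assoc, (proj2_sig g). exact (proj2_sig f).
Defined.

Definition Slice {C : Category} (N : MorClass C) (X : Ob C) : Category.
Proof.
  refine {| Ob := SliceOb N X;
            Hom := fun x y => SliceHom x y;
            idm := slice_id;
            comp := fun x y z g f => slice_comp g f |}.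
  - intros; apply slice_hom_eq; simpl; apply comp_assoc.
  - intros; apply slice_hom_eq; simpl; apply comp_id_l.
  - intros; apply slice_hom_eq; simpl; apply comp_id_r.
Defined.

Definition Fid (C : Category) : Functor C C.
Proof.
  refine {| fobj := fun a => a; fmap := fun a b f => f |}; reflexivity.
Defined.

Definition Fcomp {B C D : Category} (G : Functor C D) (F : Functor B C) : Functor B D.
Proof.
  refine {| fobj := fun a => fobj G (fobj F a);
            fmap := fun a b f => fmap G (fmap F f) |}.
  - intros; rewrite !fmap_id; reflexivity.
  - intros; rewrite !fmap_comp; reflexivity.
Defined.

Definition NatIso {C D : Category} (F G : Functor C D) : Prop :=
  exists n : NatTrans F G, forall a, is_iso (ntc n a).

Definition equivalent (C D : Category) : Prop :=
  exists (F : Functor C D) (H : Functor D C),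
    NatIso (Fcomp H F) (Fid C) /\ NatIso (Fcomp F H) (Fid D).

Definition is_cartesian {C D : Category} {F G : Functor C D} (n : NatTrans F G) : Prop :=
  forall a b (f : @Hom C a b),
    is_pullback (ntc n a) (fmap F f) (fmap G f) (ntc n b).

(** The classes E' and M' on [A, D], relative to a chosen terminal object [one] of A. *)
Definition E' {A D : Category} (E : MorClass D) (one : Ob A) : MorClass (FunCat A D) :=
  fun F G (n : NatTrans F G) => E _ _ (ntc n one).

Definition M' {A D : Category} (M : MorClass D) (one : Ob A) : MorClass (FunCat A D) :=
  fun F G (n : NatTrans F G) => is_cartesian n /\ M _ _ (ntc n one).

(* Main.v *)
Require Import Defs.
From Stdlib Require Import ProofIrrelevance FunctionalExtensionality IndefiniteDescription.

Lemma assoc {C : Category} {a b c d : Ob C} (h : Hom c d) (g : Hom b c) (f : Hom a b) :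
  h ∘ (g ∘ f) = h ∘ g ∘ f.
Proof. apply comp_assoc. Qed.
Lemma idl {C : Category} {a b : Ob C} (f : Hom a b) : idm b ∘ f = f.
Proof. apply comp_id_l. Qed.
Lemma idr {C : Category} {a b : Ob C} (f : Hom a b) : f ∘ idm a = f.
Proof. apply comp_id_r. Qed.

Section Gen.
Context {C : Category}.

Lemma pb_uniq {P X Y Z : Ob C} {p1 : Hom P X} {p2 : Hom P Y} {f : Hom X Z} {g : Hom Y Z}
  (H : is_pullback p1 p2 f g) {Q} (u v : Hom Q P) :
  p1 ∘ u = p1 ∘ v -> p2 ∘ u = p2 ∘ v -> u = v.
Proof.
  intros H1 H2. destruct H as [Hc H].
  assert (Hq : f ∘ (p1 ∘ v) = g ∘ (p2 ∘ v)) by (rewrite !comp_assoc, Hc; reflexivity).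
  destruct (H Q _ _ Hq) as [w [_ Hw]].
  rewrite <- (Hw u), (Hw v); auto.
Qed.

Definition pb_med {P X Y Z : Ob C} {p1 : Hom P X} {p2 : Hom P Y} {f : Hom X Z} {g : Hom Y Z}
  (H : is_pullback p1 p2 f g) {Q} (q1 : Hom Q X) (q2 : Hom Q Y) (Hc : f ∘ q1 = g ∘ q2) : Hom Q P :=
  proj1_sig (constructive_indefinite_description _ (proj2 H Q q1 q2 Hc)).

Lemma pb_med_spec {P X Y Z : Ob C} {p1 : Hom P X} {p2 : Hom P Y} {f : Hom X Z} {g : Hom Y Z}
  (H : is_pullback p1 p2 f g) {Q} (q1 : Hom Q X) (q2 : Hom Q Y) (Hc : f ∘ q1 = g ∘ q2) :
  p1 ∘ pb_med H q1 q2 Hc = q1 /\ p2 ∘ pb_med H q1 q2 Hc = q2.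
Proof. unfold pb_med. exact (proj1 (proj2_sig (constructive_indefinite_description _ (proj2 H Q q1 q2 Hc)))). Qed.

Lemma pb_iso {P P' X Y Z : Ob C} {p1 : Hom P X} {p2 : Hom P Y} {p1' : Hom P' X} {p2' : Hom P' Y}
  {f : Hom X Z} {g : Hom Y Z}
  (H : is_pullback p1 p2 f g) (H' : is_pullback p1' p2' f g) (u : Hom P P') :
  p1' ∘ u = p1 -> p2' ∘ u = p2 -> is_iso u.
Proof.
  intros H1 H2.
  destruct (proj2 H P' p1' p2' (proj1 H')) as [v [[V1 V2] _]].
  exists v. split.
  - apply (pb_uniq H); rewrite comp_assoc, comp_id_r; [rewrite V1|rewrite V2]; auto.
  - apply (pb_uniq H'); rewrite comp_assoc, comp_id_r; [rewrite H1|rewrite H2]; auto.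
Qed.

Lemma pb_of_iso {P X Y Z : Ob C} (p1 : Hom P X) (p2 : Hom P Y) (f : Hom X Z) (g : Hom Y Z)
  (i : Hom X P) (j : Hom Z Y) :
  i ∘ p1 = idm P -> p1 ∘ i = idm X -> j ∘ g = idm Y -> f ∘ p1 = g ∘ p2 ->
  is_pullback p1 p2 f g.
Proof.
  intros Hi1 Hi2 Hj Hc. split; auto.
  intros Q q1 q2 Hq. exists (i ∘ q1). split; [split|].
  - rewrite comp_assoc, Hi2, comp_id_l; auto.
  - rewrite <- (idl (p2 ∘ (i ∘ q1))), <- Hj.
    rewrite <- comp_assoc, (assoc g p2), <- Hc.
    rewrite <- comp_assoc, (assoc p1 i), Hi2, comp_id_l, Hq.
    rewrite comp_assoc, Hj, comp_id_l; auto.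
  - intros u [U1 U2]. rewrite <- U1, comp_assoc, Hi1, comp_id_l; auto.
Qed.

Lemma pb_compose {Fa Fb Ga Gb Ha Hb : Ob C}
  (na : Hom Fa Ga) (nb : Hom Fb Gb) (ma : Hom Ga Ha) (mb : Hom Gb Hb)
  (Ff : Hom Fa Fb) (Gf : Hom Ga Gb) (Hf : Hom Ha Hb) :
  is_pullback na Ff Gf nb -> is_pullback ma Gf Hf mb ->
  is_pullback (ma ∘ na) Ff Hf (mb ∘ nb).
Proof.
  intros [Cn Pn] [Cm Pm]. split.
  - rewrite comp_assoc, Cm, <- comp_assoc, Cn, comp_assoc; auto.
  - intros Q q1 q2 Hq.
    rewrite <- comp_assoc in Hq.
    destruct (Pm Q q1 (nb ∘ q2) Hq) as [v [[V1 V2] Vu]].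
    destruct (Pn Q v q2 V2) as [u [[U1 U2] Uu]].
    exists u. split; [split|].
    + rewrite <- comp_assoc, U1; auto.
    + auto.
    + intros u' [W1 W2]. apply Uu. split; auto.
      symmetry. apply Vu. split.
      * rewrite assoc; auto.
      * rewrite comp_assoc, Cn, <- comp_assoc, W2; auto.
Qed.

Lemma pb_paste_left {R X Y W O V : Ob C}
  (r1 : Hom R X) (r2 : Hom R Y) (f : Hom X W) (g : Hom Y W)
  (o1 : Hom O V) (o2 : Hom O Y) (k : Hom V X) (t : Hom O R) :
  is_pullback r1 r2 f g -> is_pullback o1 o2 (f ∘ k) g ->
  r1 ∘ t = k ∘ o1 -> r2 ∘ t = o2 ->
  is_pullback o1 t k r1.
Proof.
  intros Hr Ho T1 T2. split; [auto|].
  intros Q q1 q2 Hq.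
  assert (Hq' : (f ∘ k) ∘ q1 = g ∘ (r2 ∘ q2)).
  { rewrite <- comp_assoc, Hq, !comp_assoc, (proj1 Hr); auto. }
  destruct (proj2 Ho Q q1 (r2 ∘ q2) Hq') as [u [[U1 U2] Uu]].
  exists u. split; [split|]; auto.
  - apply (pb_uniq Hr).
    + rewrite comp_assoc, T1, <- comp_assoc, U1; auto.
    + rewrite comp_assoc, T2; auto.
  - intros u' [W1 W2]. apply Uu. split; auto.
    rewrite <- T2, <- comp_assoc, W2; auto.
Qed.

Lemma iso_comp {a b c : Ob C} (f : Hom a b) (g : Hom b c) :
  is_iso f -> is_iso g -> is_iso (g ∘ f).
Proof.
  intros [f' [F1 F2]] [g' [G1 G2]]. exists (f' ∘ g'). split.
  - rewrite comp_assoc, <- (assoc f'), G1, comp_id_r; auto.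
  - rewrite comp_assoc, <- (assoc g), F2, comp_id_r; auto.
Qed.

Lemma iso_inv_iso {a b : Ob C} (f : Hom a b) (g : Hom b a) :
  g ∘ f = idm a -> f ∘ g = idm b -> is_iso g.
Proof. intros; exists f; auto. Qed.

End Gen.

Lemma natural {C D : Category} {F G : Functor C D} (n : NatTrans F G) {a b : Ob C} (f : Hom a b) :
  fmap G f ∘ ntc n a = ntc n b ∘ fmap F f.
Proof. apply nt_natural. Qed.
Lemma fmapC {C D : Category} (F : Functor C D) {a b c : Ob C} (g : Hom b c) (f : Hom a b) :
  fmap F (g ∘ f) = fmap F g ∘ fmap F f.
Proof. apply fmap_comp. Qed.
Lemma fmapI {C D : Category} (F : Functor C D) (a : Ob C) : fmap F (idm a) = idm (fobj F a).
Proof. apply fmap_id. Qed.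

Lemma fc_iso {C D : Category} {F G : Functor C D} (n : NatTrans F G) :
  (forall a, is_iso (ntc n a)) -> @is_iso (FunCat C D) F G n.
Proof.
  intros H.
  set (inv := fun a => proj1_sig (constructive_indefinite_description _ (H a))).
  assert (I1 : forall a, inv a ∘ ntc n a = idm _) by
    (intro a; exact (proj1 (proj2_sig (constructive_indefinite_description _ (H a))))).
  assert (I2 : forall a, ntc n a ∘ inv a = idm _) by
    (intro a; exact (proj2 (proj2_sig (constructive_indefinite_description _ (H a))))).
  assert (Nat : forall a b (f : Hom a b), fmap F f ∘ inv a = inv b ∘ fmap G f).
  { intros a b f.
    rewrite <- (idl (fmap F f ∘ inv a)), <- (I1 b).
    rewrite <- assoc, (assoc (ntc n b)), <- natural.
    rewrite <- (assoc (fmap G f)), I2, idr. reflexivity. }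
  exists {| ntc := inv; nt_natural := Nat |}. split; apply nt_eq; intro a; simpl; auto.
Qed.

Lemma slice_iso {C : Category} {N : MorClass C} {X : Ob C} {x y : SliceOb N X}
  (u : SliceHom x y) : is_iso (proj1_sig u) -> @is_iso (Slice N X) x y u.
Proof.
  intros [v [V1 V2]].
  assert (Hv : slice_map x ∘ v = slice_map y).
  { rewrite <- (proj2_sig u), <- assoc, V2, idr. reflexivity. }
  exists (exist _ v Hv). split; apply slice_hom_eq; simpl; auto.
Qed.

Section Main.
Context (D A : Category) (one : Ob A) (Hpb : has_pullbacks D) (Ht : is_terminal one).

Definition bang (a : Ob A) : Hom a one := proj1_sig (constructive_indefinite_description _ (Ht a)).
Lemma bang_u a (g : Hom a one) : g = bang a.
Proof. exact (proj2_sig (constructive_indefinite_description _ (Ht a)) g). Qed.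
Lemma bang_comp a b (h : Hom a b) : bang b ∘ h = bang a.
Proof. apply bang_u. Qed.
Lemma bang_one : bang one = idm one.
Proof. symmetry; apply bang_u. Qed.

Section PB.
Context (Y : Functor A D) (Cc : Ob D) (c : Hom Cc (fobj Y one)).

Definition pb_all (a : Ob A) : {P : Ob D & {p1 : Hom P (fobj Y a) & {p2 : Hom P Cc |
   is_pullback p1 p2 (fmap Y (bang a)) c}}}.
Proof.
  destruct (constructive_indefinite_description _ (Hpb _ _ _ (fmap Y (bang a)) c)) as [P HP].
  destruct (constructive_indefinite_description _ HP) as [p1 H1].
  destruct (constructive_indefinite_description _ H1) as [p2 H2].
  exact (existT _ P (existT _ p1 (exist _ p2 H2))).
Defined.

Definition pbP a : Ob D := projT1 (pb_all a).
Definition pbp1 a : Hom (pbP a) (fobj Y a) := projT1 (projT2 (pb_all a)).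
Definition pbp2 a : Hom (pbP a) Cc := proj1_sig (projT2 (projT2 (pb_all a))).
Definition pb_is a : is_pullback (pbp1 a) (pbp2 a) (fmap Y (bang a)) c :=
  proj2_sig (projT2 (projT2 (pb_all a))).

Lemma pbmap_comm a b (h : Hom a b) :
  fmap Y (bang b) ∘ (fmap Y h ∘ pbp1 a) = c ∘ pbp2 a.
Proof. rewrite assoc, <- fmapC, bang_comp. exact (proj1 (pb_is a)). Qed.

Definition pbmap a b (h : Hom a b) : Hom (pbP a) (pbP b) :=
  pb_med (pb_is b) _ _ (pbmap_comm a b h).

Lemma pbmap_1 a b (h : Hom a b) : pbp1 b ∘ pbmap a b h = fmap Y h ∘ pbp1 a.
Proof. exact (proj1 (pb_med_spec _ _ _ _)). Qed.
Lemma pbmap_2 a b (h : Hom a b) : pbp2 b ∘ pbmap a b h = pbp2 a.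
Proof. exact (proj2 (pb_med_spec _ _ _ _)). Qed.

Definition pbF : Functor A D.
Proof.
  refine {| fobj := pbP; fmap := pbmap |}.
  - intro a. apply (pb_uniq (pb_is a)).
    + rewrite pbmap_1, fmapI, idl, idr. reflexivity.
    + rewrite pbmap_2, idr. reflexivity.
  - intros a b d g f. apply (pb_uniq (pb_is d)).
    + rewrite pbmap_1, assoc, pbmap_1, <- assoc, pbmap_1, assoc, fmapC. reflexivity.
    + rewrite pbmap_2, assoc, pbmap_2, pbmap_2. reflexivity.
Defined.

Definition pbm : NatTrans pbF Y.
Proof.
  refine (Build_NatTrans _ _ pbF Y pbp1 _).
  intros a b h. symmetry. apply pbmap_1.
Defined.

Lemma pbm_cart : is_cartesian pbm.
Proof.
  intros a b h. simpl.
  pose proof (pb_is a) as Ha.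
  rewrite <- (bang_comp a b h), fmapC in Ha.
  exact (pb_paste_left _ _ _ _ _ _ _ _ (pb_is b) Ha (pbmap_1 a b h) (pbmap_2 a b h)).
Qed.

Lemma pbp1_one : pbp1 one = c ∘ pbp2 one.
Proof.
  pose proof (proj1 (pb_is one)) as H. rewrite bang_one, fmapI, idl in H. exact H.
Qed.

Lemma pbp2_one_iso : is_iso (pbp2 one).
Proof.
  assert (Hc : fmap Y (bang one) ∘ c = c ∘ idm Cc) by (rewrite bang_one, fmapI, idl, idr; auto).
  exists (pb_med (pb_is one) c (idm Cc) Hc).
  destruct (pb_med_spec (pb_is one) c (idm Cc) Hc) as [U1 U2].
  split; [|exact U2].
  apply (pb_uniq (pb_is one)).
  - rewrite assoc, U1, idr, pbp1_one. reflexivity.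
  - rewrite assoc, U2, idl, idr. reflexivity.
Qed.

Section Univ.
Context (X : Functor A D) (f : NatTrans X Y) (e : forall a, Hom (fobj X a) Cc)
  (He1 : forall a, fmap Y (bang a) ∘ ntc f a = c ∘ e a)
  (He2 : forall a b (h : Hom a b), e b ∘ fmap X h = e a).

Definition pbu_c a : Hom (fobj X a) (pbP a) := pb_med (pb_is a) (ntc f a) (e a) (He1 a).
Lemma pbu_1 a : pbp1 a ∘ pbu_c a = ntc f a.
Proof. exact (proj1 (pb_med_spec _ _ _ _)). Qed.
Lemma pbu_2 a : pbp2 a ∘ pbu_c a = e a.
Proof. exact (proj2 (pb_med_spec _ _ _ _)). Qed.

Definition pbu : NatTrans X pbF.
Proof.
  refine (Build_NatTrans _ _ X pbF pbu_c _).
  intros a b h. simpl. apply (pb_uniq (pb_is b)).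
  - rewrite !assoc, pbmap_1, <- assoc, pbu_1, pbu_1, natural. reflexivity.
  - rewrite !assoc, pbmap_2, pbu_2, pbu_2, He2. reflexivity.
Defined.
End Univ.
End PB.


Section OFS.
Context (E M : MorClass D) (HO : is_OFS D E M).

Lemma fc_ofs : is_OFS (FunCat A D) (E' E one) (M' M one).
Proof.
  split.
  - intros F G n [g [G1 G2]]. unfold E'. apply (ofs_E_iso _ _ _ HO).
    exists (ntc g one).
    pose proof (f_equal (fun k => ntc k one) G1) as H1.
    pose proof (f_equal (fun k => ntc k one) G2) as H2. simpl in H1, H2. auto.
  - intros F G n [g [G1 G2]].
    pose proof (fun a => f_equal (fun k => ntc k a) G1) as H1.
    pose proof (fun a => f_equal (fun k => ntc k a) G2) as H2. simpl in H1, H2.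
    split.
    + intros a b h. apply (pb_of_iso _ _ _ _ (ntc g a) (ntc g b)); auto.
      apply natural.
    + apply (ofs_M_iso _ _ _ HO). exists (ntc g one). auto.
  - intros F G H g f Hf Hg. unfold E' in *. simpl. apply (ofs_E_comp _ _ _ HO); auto.
  - intros F G H g f [Cf Mf] [Cg Mg]. split.
    + intros a b h. simpl. apply (pb_compose _ _ _ _ _ (fmap G h)); auto.
    + simpl. apply (ofs_M_comp _ _ _ HO); auto.
  - intros X Y Z W e m f g He [Hcart Hm] Hsq.
    pose proof (fun a => f_equal (fun k => ntc k a) Hsq) as Hs. simpl in Hs.
    destruct (ofs_lift _ _ _ HO _ _ _ _ _ _ _ _ He Hm (Hs one)) as [d1 [[D1 D2] Du]].
    assert (Hc : forall a, fmap W (bang a) ∘ ntc g a = ntc m one ∘ (d1 ∘ fmap Y (bang a))).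
    { intro a. rewrite natural, assoc, D2. reflexivity. }
    set (dc := fun a => pb_med (Hcart a one (bang a)) (ntc g a) (d1 ∘ fmap Y (bang a)) (Hc a)).
    assert (Dd1 : forall a, ntc m a ∘ dc a = ntc g a) by (intro a; exact (proj1 (pb_med_spec _ _ _ _))).
    assert (Dd2 : forall a, fmap Z (bang a) ∘ dc a = d1 ∘ fmap Y (bang a))
      by (intro a; exact (proj2 (pb_med_spec _ _ _ _))).
    assert (Nat : forall a b (h : Hom a b), fmap Z h ∘ dc a = dc b ∘ fmap Y h).
    { intros a b h. apply (pb_uniq (Hcart b one (bang b))).
      - rewrite assoc, <- natural, <- assoc, Dd1, assoc, Dd1, natural. reflexivity.
      - rewrite assoc, <- fmapC, bang_comp, Dd2, assoc, Dd2, <- assoc, <- fmapC, bang_comp.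
        reflexivity. }
    exists (Build_NatTrans _ _ Y Z dc Nat). split; [split|].
    + apply nt_eq; intro a; simpl. apply (pb_uniq (Hcart a one (bang a))).
      * rewrite assoc, Dd1. apply Hs.
      * rewrite assoc, Dd2, <- assoc, natural, assoc, D1, natural. reflexivity.
    + apply nt_eq; intro a; simpl. apply Dd1.
    + intros d' [E1 E2].
      pose proof (fun a => f_equal (fun k => ntc k a) E1) as F1.
      pose proof (fun a => f_equal (fun k => ntc k a) E2) as F2. simpl in F1, F2.
      assert (d'1 : ntc d' one = d1) by (symmetry; apply Du; auto).
      apply nt_eq; intro a; simpl. apply (pb_uniq (Hcart a one (bang a))).
      * rewrite Dd1, F2. reflexivity.
      * rewrite Dd2, natural, d'1. reflexivity.
  - intros X Y f.
    destruct (ofs_fact _ _ _ HO _ _ (ntc f one)) as [Cc [e1 [m1 [He [Hm Hme]]]]].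
    set (e := fun a => e1 ∘ fmap X (bang a)).
    assert (He1 : forall a, fmap Y (bang a) ∘ ntc f a = m1 ∘ e a).
    { intro a. rewrite natural. unfold e. rewrite assoc, Hme. reflexivity. }
    assert (He2 : forall a b (h : Hom a b), e b ∘ fmap X h = e a).
    { intros a b h. unfold e. rewrite <- assoc, <- fmapC, bang_comp. reflexivity. }
    exists (pbF Y Cc m1), (pbu Y Cc m1 X f e He1 He2), (pbm Y Cc m1). split; [|split].
    + unfold E'. change (E _ _ (pbu_c Y Cc m1 X f e He1 one)).
      destruct (pbp2_one_iso Y Cc m1) as [j [J1 J2]].
      assert (Hu : pbu_c Y Cc m1 X f e He1 one = j ∘ e1).
      { rewrite <- (idl (pbu_c Y Cc m1 X f e He1 one)), <- J1, <- assoc, pbu_2.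
        unfold e. rewrite bang_one, fmapI, idr. reflexivity. }
      rewrite Hu. apply (ofs_E_comp _ _ _ HO); [exact He|].
      apply (ofs_E_iso _ _ _ HO). exists (pbp2 Y Cc m1 one). auto.
    + split; [apply pbm_cart|].
      change (M _ _ (pbp1 Y Cc m1 one)). rewrite pbp1_one.
      apply (ofs_M_comp _ _ _ HO); [apply (ofs_M_iso _ _ _ HO), pbp2_one_iso | exact Hm].
    + apply nt_eq; intro a; simpl. apply pbu_1.
Qed.


Section Equiv.
Context (G : Functor A D).

Definition SL := @Slice (FunCat A D) (M' M one) G.
Definition SR := Slice M (fobj G one).

Definition Fq_obj (x : SliceOb (M' M one) G) : SliceOb M (fobj G one) :=
  existT _ (fobj (projT1 x) one)
    (exist _ (ntc (slice_map x) one) (proj2 (proj2_sig (projT2 x)))).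

Definition Fq_map {x y : SliceOb (M' M one) G} (phi : SliceHom x y) :
  SliceHom (Fq_obj x) (Fq_obj y).
Proof.
  refine (exist _ (ntc (proj1_sig phi) one) _).
  exact (f_equal (fun k => ntc k one) (proj2_sig phi)).
Defined.

Definition Fq : Functor SL SR.
Proof.
  refine {| fobj := Fq_obj : Ob SL -> Ob SR; fmap := fun x y phi => Fq_map phi |}.
  - intro a. apply slice_hom_eq. reflexivity.
  - intros. apply slice_hom_eq. reflexivity.
Defined.

Lemma pbm_M (Cc : Ob D) (c : Hom Cc (fobj G one)) : M Cc (fobj G one) c ->
  M' M one _ _ (pbm G Cc c).
Proof.
  intro Hc. split; [apply pbm_cart|].
  change (M _ _ (pbp1 G Cc c one)). rewrite pbp1_one.
  apply (ofs_M_comp _ _ _ HO); [apply (ofs_M_iso _ _ _ HO), pbp2_one_iso | exact Hc].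
Qed.

Definition Hq_obj (y : SliceOb M (fobj G one)) : SliceOb (M' M one) G :=
  existT _ (pbF G (projT1 y) (slice_map y))
    (exist _ (pbm G (projT1 y) (slice_map y)) (pbm_M _ _ (proj2_sig (projT2 y)))).

Section HqMap.
Context {y y' : SliceOb M (fobj G one)} (k : SliceHom y y').
Definition hq_e a := proj1_sig k ∘ pbp2 G (projT1 y) (slice_map y) a.
Lemma hq_e1 a : fmap G (bang a) ∘ ntc (pbm G (projT1 y) (slice_map y)) a = slice_map y' ∘ hq_e a.
Proof.
  unfold hq_e. rewrite assoc, (proj2_sig k). exact (proj1 (pb_is _ _ _ a)).
Qed.
Lemma hq_e2 a b (h : Hom a b) : hq_e b ∘ fmap (pbF G (projT1 y) (slice_map y)) h = hq_e a.
Proof. unfold hq_e. rewrite <- assoc. simpl. rewrite pbmap_2. reflexivity. Qed.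
Definition hq_nt := pbu G (projT1 y') (slice_map y') (pbF G (projT1 y) (slice_map y)) (pbm G (projT1 y) (slice_map y)) hq_e hq_e1 hq_e2.
Lemma hq_1 a : pbp1 G (projT1 y') (slice_map y') a ∘ (pbu_c G (projT1 y') (slice_map y') (pbF G (projT1 y) (slice_map y)) (pbm G (projT1 y) (slice_map y)) hq_e hq_e1 a : Hom (pbP G (projT1 y) (slice_map y) a) _) = pbp1 G (projT1 y) (slice_map y) a.
Proof. exact (pbu_1 _ _ _ _ (pbm G (projT1 y) (slice_map y)) _ _ a). Qed.
Lemma hq_2 a : pbp2 G (projT1 y') (slice_map y') a ∘ (pbu_c G (projT1 y') (slice_map y') (pbF G (projT1 y) (slice_map y)) (pbm G (projT1 y) (slice_map y)) hq_e hq_e1 a : Hom (pbP G (projT1 y) (slice_map y) a) _) = proj1_sig k ∘ pbp2 G (projT1 y) (slice_map y) a.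
Proof. exact (pbu_2 _ _ _ _ (pbm G (projT1 y) (slice_map y)) _ _ a). Qed.
Definition Hq_map : SliceHom (Hq_obj y) (Hq_obj y').
Proof.
  refine (exist _ hq_nt _).
  apply nt_eq; intro a. simpl. exact (pbu_1 _ _ _ _ (pbm G (projT1 y) (slice_map y)) _ _ a).
Defined.
End HqMap.

Definition Hq : Functor SR SL.
Proof.
  refine {| fobj := Hq_obj : Ob SR -> Ob SL; fmap := fun x y k => Hq_map k |}.
  - intro y. apply slice_hom_eq. apply nt_eq; intro a. simpl.
    apply (pb_uniq (pb_is _ _ _ a)).
    + rewrite (hq_1 (slice_id y) a), idr. reflexivity.
    + rewrite (hq_2 (slice_id y) a), idr. simpl. rewrite idl. reflexivity.
  - intros y1 y2 y3 k2 k1. apply slice_hom_eq. apply nt_eq; intro a. simpl.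
    apply (pb_uniq (pb_is _ _ _ a)).
    + rewrite (hq_1 (slice_comp k2 k1) a), assoc, (hq_1 k2 a), (hq_1 k1 a). reflexivity.
    + rewrite (hq_2 (slice_comp k2 k1) a), assoc, (hq_2 k2 a), <- assoc, (hq_2 k1 a). simpl.
      rewrite assoc. reflexivity.
Defined.


Section Iso1.
Context (x : SliceOb (M' M one) G).
Definition xc := ntc (slice_map x) one.
Definition xcart : is_cartesian (slice_map x) := proj1 (proj2_sig (projT2 x)).
Definition w a : Hom (pbP G (fobj (projT1 x) one) xc a) (fobj (projT1 x) a) :=
  pb_med (xcart a one (bang a)) (pbp1 G _ xc a) (pbp2 G _ xc a) (proj1 (pb_is G _ xc a)).
Lemma w1 a : ntc (slice_map x) a ∘ w a = pbp1 G _ xc a.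
Proof. exact (proj1 (pb_med_spec _ _ _ _)). Qed.
Lemma w2 a : fmap (projT1 x) (bang a) ∘ w a = pbp2 G _ xc a.
Proof. exact (proj2 (pb_med_spec _ _ _ _)). Qed.
Lemma w_nat a b (h : Hom a b) :
  fmap (projT1 x) h ∘ w a = w b ∘ pbmap G (fobj (projT1 x) one) xc a b h.
Proof.
  apply (pb_uniq (xcart b one (bang b))).
  - rewrite assoc, <- (natural (slice_map x) h), <- assoc, w1, assoc, w1, pbmap_1. reflexivity.
  - rewrite assoc, <- fmapC, bang_comp, w2, assoc, w2, pbmap_2. reflexivity.
Qed.
Definition wN : NatTrans (pbF G (fobj (projT1 x) one) xc) (projT1 x) :=
  Build_NatTrans _ _ (pbF G (fobj (projT1 x) one) xc) (projT1 x) w w_nat.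
Definition iso1c : @SliceHom (FunCat A D) (M' M one) G (Hq_obj (Fq_obj x)) x.
Proof.
  refine (exist _ wN _). apply nt_eq; intro a. simpl. apply w1.
Defined.
Lemma iso1c_iso : @is_iso SL _ _ iso1c.
Proof.
  apply slice_iso. apply fc_iso. intro a. simpl.
  exact (pb_iso (pb_is G _ xc a) (xcart a one (bang a)) (w a) (w1 a) (w2 a)).
Qed.
End Iso1.

Lemma iso1_nat (x y : Ob SL) (phi : Hom x y) :
  @comp SL _ _ _ (fmap (Fid SL) phi) (iso1c x : @Hom SL (fobj (Fcomp Hq Fq) x) (fobj (Fid SL) x)) =
  @comp SL _ _ _ (iso1c y : @Hom SL (fobj (Fcomp Hq Fq) y) (fobj (Fid SL) y)) (fmap (Fcomp Hq Fq) phi).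
Proof.
  apply slice_hom_eq. apply nt_eq; intro a.
  assert (Hp : ntc (slice_map y) a ∘ ntc (proj1_sig phi) a = ntc (slice_map x) a)
    by exact (f_equal (fun k => ntc k a) (proj2_sig phi)).
  pose (HQ := pbu_c G (fobj (projT1 y) one) (xc y) (pbF G (fobj (projT1 x) one) (xc x))
     (pbm G (fobj (projT1 x) one) (xc x)) (hq_e (Fq_map phi)) (hq_e1 (Fq_map phi)) a).
  assert (L1 : ntc (slice_map y) a ∘ (ntc (proj1_sig phi) a ∘ w x a) = pbp1 G (fobj (projT1 x) one) (xc x) a).
  { rewrite assoc, Hp. apply w1. }
  assert (R1 : ntc (slice_map y) a ∘ (w y a ∘ HQ) = pbp1 G (fobj (projT1 x) one) (xc x) a).
  { rewrite assoc, w1. exact (hq_1 (Fq_map phi) a). }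
  assert (L2 : fmap (projT1 y) (bang a) ∘ (ntc (proj1_sig phi) a ∘ w x a) = ntc (proj1_sig phi) one ∘ pbp2 G _ (xc x) a).
  { rewrite assoc, (natural (proj1_sig phi) (bang a)), <- assoc, w2. reflexivity. }
  assert (R2 : fmap (projT1 y) (bang a) ∘ (w y a ∘ HQ) = ntc (proj1_sig phi) one ∘ pbp2 G _ (xc x) a).
  { rewrite assoc, w2. exact (hq_2 (Fq_map phi) a). }
  apply (pb_uniq (xcart y a one (bang a))).
  - etransitivity; [exact L1| symmetry; exact R1].
  - etransitivity; [exact L2| symmetry; exact R2].
Qed.

Definition iso1 : NatTrans (Fcomp Hq Fq) (Fid SL) :=
  Build_NatTrans _ _ (Fcomp Hq Fq) (Fid SL) iso1c iso1_nat.

Definition iso2c (y : Ob SR) : Hom (fobj (Fcomp Fq Hq) y) (fobj (Fid SR) y).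
Proof.
  refine (exist _ (pbp2 G (projT1 y) (slice_map y) one) _).
  symmetry. apply pbp1_one.
Defined.

Lemma iso2_nat (x y : Ob SR) (k : Hom x y) :
  fmap (Fid SR) k ∘ iso2c x = iso2c y ∘ fmap (Fcomp Fq Hq) k.
Proof.
  apply slice_hom_eq. simpl. symmetry. exact (hq_2 k one).
Qed.

Definition iso2 : NatTrans (Fcomp Fq Hq) (Fid SR) :=
  Build_NatTrans _ _ (Fcomp Fq Hq) (Fid SR) iso2c iso2_nat.

Lemma equiv_slices : equivalent SL SR.
Proof.
  exists Fq, Hq. split.
  - exists iso1. intro x. apply iso1c_iso.
  - exists iso2. intro y. apply slice_iso. apply pbp2_one_iso.
Qed.

End Equiv.
End OFS.
End Main.

Theorem lemma4p2 (D A : Category) (E M : MorClass D) (one : Ob A) :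
  is_OFS D E M -> has_pullbacks D -> is_terminal one ->
  is_OFS (FunCat A D) (E' E one) (M' M one) /\
  forall G : Functor A D,
    equivalent (@Slice (FunCat A D) (M' M one) G) (Slice M (fobj G one)).
Proof.
  intros HO Hpb Ht. split.
  - exact (fc_ofs D A one Hpb Ht E M HO).
  - intro G. exact (equiv_slices D A one Hpb Ht E M HO G).
Qed.
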